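(* Let $\mu>1/2$, $0<\nu<1/2$. (1) For every $g\in X$ and all $x\in\mathbb{R}$, $$|h^{-1}(x)|\le \tfrac1\nu |x|^\nu(x^2+1)^{\frac12(\mu-\nu)}e^{\|g\|_\infty},$$ $$|h^{-1}(x)|\ge e^{-(\mu-1)}|x|^\nu(x^2+1)^{\frac12(\mu-\nu)}e^{\fint_0^x g}\ge e^{-(\mu-1)}|x|^\nu(x^2+1)^{\frac12(\mu-\nu)}e^{-\|g\|_\infty}.$$ (2) For every $g\in X_1$ and all $x\in\mathbb{R}\setminus\{0\}$, $$e^{1-\nu-6(\mu-\nu)}|x|^{\nu-1}(x^2+1)^{\frac12(\mu-\nu)}e^{g(x)}\le \frac{h^{-1}(x)}{x}\le \tfrac1\nu |x|^{\nu-1}(x^2+1)^{\frac12(\mu-\nu)}e^{g(x)}.$$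
   Context: $X=\{g\in C(\mathbb{R})\cap L^\infty(\mathbb{R}) \text{ real}:\ \lim_{x\to\pm\infty}g(x)=0\}$ with norm $\|g\|_\infty$. For $g\in X$ let $G(x)=g(x)+\frac12(\mu-\nu)\ln(x^2+1)$, and $X_1=\{g\in X: G\text{ is even and }0\le G(x)-G(y)\le(\mu-\nu)(\ln\frac xy+2)\text{ for all }0\le y\le x\}$ (the upper bound being vacuous when $y=0$). For $g\in X$, $h^{-1}:\mathbb{R}\to\mathbb{R}$ is defined by $h^{-1}(0)=0$, $(h^{-1})'(x)=|x|^{\nu-1}(x^2+1)^{(\mu-\nu)/2}e^{g(x)}$ ($x\ne0$). For an interval $I$, $\fint_I g=\frac1{|I|}\int_I g$, and $\fint_0^x g$ denotes the average of $g$ over the interval with endpoints $0$ and $x$. *)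

(* Defs.v *)
From Stdlib Require Import Reals Lra.
Open Scope R_scope.

(* |x|^a, with the convention |0|^a = 0 (used only for a > 0 at x = 0). *)
Definition powabs (x a : R) : R :=
  if Req_EM_T x 0 then 0 else Rpower (Rabs x) a.

Definition inX (g : R -> R) : Prop :=
  continuity g /\
  (exists M, forall x, Rabs (g x) <= M) /\
  (forall eps, 0 < eps -> exists A, forall x, A < Rabs x -> Rabs (g x) < eps).

Lemma inX_cont (g : R -> R) : inX g -> continuity g.
Proof. intros [H _]; exact H. Qed.

Definition is_supnorm (g : R -> R) (N : R) : Prop :=
  is_lub (fun y => exists x, y = Rabs (g x)) N.

Definition integ (f : R -> R) (Hf : continuity f) (a b : R) : R :=
  match Rle_dec a b with
  | left H => RiemannInt (@continuity_implies_RiemannInt f a b H (fun x _ => Hf x))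
  | right H => - RiemannInt (@continuity_implies_RiemannInt f b a
                  (Rlt_le _ _ (Rnot_le_lt _ _ H)) (fun x _ => Hf x))
  end.

Definition avg0 (f : R -> R) (Hf : continuity f) (x : R) : R :=
  if Req_EM_T x 0 then f 0 else integ f Hf 0 x / x.

Definition Gfun (mu nu : R) (g : R -> R) (x : R) : R :=
  g x + / 2 * (mu - nu) * ln (x ^ 2 + 1).

Definition inX1 (mu nu : R) (g : R -> R) : Prop :=
  inX g /\
  (forall x, Gfun mu nu g (- x) = Gfun mu nu g x) /\
  (forall x y, 0 <= y -> y <= x ->
     0 <= Gfun mu nu g x - Gfun mu nu g y /\
     (0 < y -> Gfun mu nu g x - Gfun mu nu g y <= (mu - nu) * (ln (x / y) + 2))).

(* H is h^{-1}: H(0)=0, H continuous (at 0), H'(x) = |x|^(nu-1)(x^2+1)^((mu-nu)/2) e^(g x), x<>0 *)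
Definition is_hinv (mu nu : R) (g : R -> R) (H : R -> R) : Prop :=
  H 0 = 0 /\ continuity_pt H 0 /\
  (forall x, x <> 0 ->
     derivable_pt_lim H x
       (powabs x (nu - 1) * Rpower (x ^ 2 + 1) ((mu - nu) / 2) * exp (g x))).

(* Main.v *)
Require Import Defs.
From Stdlib Require Import Reals Lra.
From Coquelicot Require Import Coquelicot.
Open Scope R_scope.

Lemma exp_mono x y : x <= y -> exp x <= exp y.
Proof. intros h. destruct h as [h|h]; [left; apply exp_increasing; exact h| rewrite h; lra]. Qed.

Lemma incr (K : R -> R) a b : a < b ->
  (forall t, a <= t <= b -> exists d, is_derive K t d /\ 0 <= d) -> K a <= K b.
Proof.
  intros hab hd.
  destruct (MVT_gen K a b (fun t => Derive K t)) as [c [hc he]].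
  - intros x hx. rewrite Rmin_left, Rmax_right in hx by lra.
    destruct (hd x) as [d [h1 h2]]; [lra|]. rewrite (is_derive_unique _ _ _ h1); exact h1.
  - intros x hx. rewrite Rmin_left, Rmax_right in hx by lra.
    destruct (hd x) as [d [h1 h2]]; [lra|].
    apply continuity_pt_filterlim. apply (ex_derive_continuous K x). exists d; exact h1.
  - rewrite Rmin_left, Rmax_right in hc by lra.
    destruct (hd c) as [d [h1 h2]]; [lra|]. rewrite (is_derive_unique _ _ _ h1) in he. nra.
Qed.

Lemma mono (A B A' B' : R -> R) x : 0 < x ->
  (forall t, 0 < t <= x -> is_derive A t (A' t) /\ is_derive B t (B' t) /\ A' t <= B' t) ->
  forall e, 0 < e < x -> B e - A e <= B x - A x.
Proof.
  intros hx hd e he.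
  apply (incr (fun t => B t - A t)); [lra|].
  intros t ht. destruct (hd t) as [h1 [h2 h3]]; [lra|].
  exists (B' t - A' t). split; [|lra].
  apply (is_derive_minus B A); assumption.
Qed.

Lemma limit0 (K : R -> R) x : 0 < x -> (forall e, 0 < e < x -> K e <= K x) ->
  (forall d, 0 < d -> exists e, 0 < e < x /\ - d < K e) -> 0 <= K x.
Proof.
  intros hx hm hl. destruct (Rle_lt_dec 0 (K x)) as [h|h]; [exact h|].
  destruct (hl (- K x)) as [e [he1 he2]]; [lra|]. specialize (hm e he1). lra.
Qed.

Lemma cont0 (H : R -> R) : continuity_pt H 0 -> H 0 = 0 ->
  forall d, 0 < d -> exists eta, 0 < eta /\ forall e, 0 < e < eta -> Rabs (H e) < d.
Proof.
  intros hc h0 d hd. destruct (hc d hd) as [eta [heta hh]].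
  exists eta. split; [exact heta|]. intros e he.
  assert (dist R_met (H e) (H 0) < d).
  { apply hh. split. { split; [exact I|lra]. } simpl. unfold R_dist. rewrite Rminus_0_r, Rabs_right; lra. }
  simpl in H0. unfold R_dist in H0. rewrite h0, Rminus_0_r in H0. exact H0.
Qed.

Lemma small_pow p d eta : 0 < p -> 0 < d -> 0 < eta ->
  exists e, 0 < e < eta /\ Rpower e p < d.
Proof.
  intros hp hd he.
  set (e0 := exp (ln (d / 2) / p)).
  assert (he0 : 0 < e0) by apply exp_pos.
  exists (Rmin (eta / 2) e0). split.
  { split. apply Rmin_glb_lt; lra. apply Rle_lt_trans with (eta/2); [apply Rmin_l|lra]. }
  unfold Rpower.
  assert (hle : ln (Rmin (eta/2) e0) <= ln (d/2) / p).
  { replace (ln (d/2) / p) with (ln e0) by (unfold e0; rewrite ln_exp; reflexivity).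
    apply ln_le. apply Rmin_glb_lt; lra. apply Rmin_r. }
  apply Rle_lt_trans with (exp (ln (d/2))).
  { apply exp_mono.
    apply Rmult_le_compat_l with (r := p) in hle; [|lra].
    replace (p * (ln (d/2) / p)) with (ln (d/2)) in hle by (field; lra). exact hle. }
  rewrite exp_ln; lra.
Qed.

Lemma lower_lim (H L : R -> R) x p C : 0 < x -> 0 < p -> 0 <= C -> continuity_pt H 0 -> H 0 = 0 ->
  (forall e, 0 < e <= 1 -> L e <= C * Rpower e p) ->
  (forall e, 0 < e < x -> H e - L e <= H x - L x) -> L x <= H x.
Proof.
  intros hx hp hC hc h0 hL hm.
  cut (0 <= H x - L x); [lra|].
  apply (limit0 (fun t => H t - L t)); [exact hx|exact hm|].
  intros d hd.
  destruct (cont0 H hc h0 (d/2)) as [eta [heta hh]]; [lra|].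
  destruct (small_pow p (d / (2 * (C + 1))) (Rmin eta (Rmin x 1))) as [e [he hpe]].
  - exact hp.
  - apply Rdiv_lt_0_compat; lra.
  - apply Rmin_glb_lt; [lra|]. apply Rmin_glb_lt; lra.
  - assert (e < eta) by (apply Rlt_le_trans with (1 := proj2 he); apply Rmin_l).
    assert (e < Rmin x 1) by (apply Rlt_le_trans with (1 := proj2 he); apply Rmin_r).
    assert (e < x) by (apply Rlt_le_trans with (1 := H1); apply Rmin_l).
    assert (e < 1) by (apply Rlt_le_trans with (1 := H1); apply Rmin_r).
    exists e. split; [lra|].
    specialize (hh e (conj (proj1 he) H0)). apply Rabs_def2 in hh.
    specialize (hL e (conj (proj1 he) (Rlt_le _ _ H3))).
    assert (hpos : 0 < Rpower e p) by (unfold Rpower; apply exp_pos).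
    assert (hq : (C + 1) * Rpower e p < d / 2).
    { apply Rmult_lt_compat_l with (r := C + 1) in hpe; [|lra].
      replace ((C + 1) * (d / (2 * (C + 1)))) with (d/2) in hpe by (field; lra). exact hpe. }
    nra.
Qed.

Lemma upper_lim (H U : R -> R) x : 0 < x -> continuity_pt H 0 -> H 0 = 0 ->
  (forall e, 0 < e -> 0 <= U e) ->
  (forall e, 0 < e < x -> U e - H e <= U x - H x) -> H x <= U x.
Proof.
  intros hx hc h0 hU hm.
  cut (0 <= U x - H x); [lra|].
  apply (limit0 (fun t => U t - H t)); [exact hx|exact hm|].
  intros d hd.
  destruct (cont0 H hc h0 d hd) as [eta [heta hh]].
  assert (0 < Rmin eta x) by (apply Rmin_glb_lt; lra).
  assert (Rmin eta x <= eta) by apply Rmin_l.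
  assert (Rmin eta x <= x) by apply Rmin_r.
  exists (Rmin eta x / 2). split; [lra|].
  specialize (hh (Rmin eta x / 2)). apply Rabs_def2 in hh; [|lra].
  specialize (hU (Rmin eta x / 2)). lra.
Qed.

Lemma derivH mu nu g H : is_hinv mu nu g H -> forall t, 0 < t ->
  is_derive H t (exp (nu * ln t) / t * exp ((mu - nu) / 2 * ln (t ^ 2 + 1)) * exp (g t)).
Proof.
  intros [_ [_ hd]] t ht. apply is_derive_Reals.
  replace (exp (nu * ln t) / t * exp ((mu - nu) / 2 * ln (t ^ 2 + 1)) * exp (g t))
    with (powabs t (nu - 1) * Rpower (t ^ 2 + 1) ((mu - nu) / 2) * exp (g t)).
  { apply hd; lra. }
  unfold powabs. destruct (Req_EM_T t 0); [lra|]. rewrite Rabs_right by lra. unfold Rpower.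
  replace ((nu - 1) * ln t) with (nu * ln t + - ln t) by ring.
  rewrite exp_plus, exp_Ropp, exp_ln by lra. field. lra.
Qed.

Lemma exRInt g a b : continuity g -> ex_RInt g a b.
Proof. intros hc. apply (ex_RInt_continuous (V := R_CompleteNormedModule)). intros; apply continuity_pt_filterlim, hc. Qed.

Lemma derivR g : continuity g -> forall t, is_derive (fun t => RInt g 0 t) t (g t).
Proof.
  intros hc t. apply (is_derive_RInt g (fun t => RInt g 0 t) 0 t).
  - apply filter_forall. intros; apply (RInt_correct (V:=R_CompleteNormedModule)), exRInt, hc.
  - apply continuity_pt_filterlim, hc.
Qed.

Lemma Rbound g N x : continuity g -> (forall t, Rabs (g t) <= N) -> 0 < x ->
  - N * x <= RInt g 0 x <= N * x.
Proof.
  intros hc hN hx.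
  assert (e1 : RInt (fun _ => N) 0 x = N * x).
  { rewrite RInt_const. unfold scal; simpl; unfold mult; simpl. ring. }
  assert (e2 : RInt (fun _ => - N) 0 x = - N * x).
  { rewrite RInt_const. unfold scal; simpl; unfold mult; simpl. ring. }
  split.
  - rewrite <- e2. apply RInt_le; [lra| apply ex_RInt_const | apply exRInt, hc |].
    intros t _. specialize (hN t). apply Rabs_le_between in hN. lra.
  - rewrite <- e1. apply RInt_le; [lra| apply exRInt, hc | apply ex_RInt_const |].
    intros t _. specialize (hN t). apply Rabs_le_between in hN. lra.
Qed.

Ltac pos := repeat (apply Rmult_lt_0_compat || apply Rinv_0_lt_compat || apply exp_pos
   || apply Rdiv_lt_0_compat); try lra.

Lemma core1u mu nu g H N x : 1/2 < mu -> 0 < nu -> nu < 1/2 ->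
  (forall t, Rabs (g t) <= N) -> is_hinv mu nu g H -> 0 < x ->
  H x <= / nu * Rpower x nu * Rpower (x ^ 2 + 1) ((mu - nu) / 2) * exp N.
Proof.
  intros hmu hnu0 hnu1 hN hH hx.
  set (P := Rpower (x ^ 2 + 1) ((mu - nu) / 2) * exp N).
  assert (hP : 0 < P) by (unfold P, Rpower; pos).
  apply Rle_trans with (/ nu * exp (nu * ln x) * P); [| right; unfold P, Rpower; ring].
  destruct hH as [h0 [hc hd]].
  apply (upper_lim H (fun t => / nu * exp (nu * ln t) * P) x hx hc h0).
  { intros e he. apply Rlt_le. pos. }
  apply (mono H (fun t => / nu * exp (nu * ln t) * P)
    (fun t => exp (nu * ln t) / t * exp ((mu - nu) / 2 * ln (t ^ 2 + 1)) * exp (g t))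
    (fun t => exp (nu * ln t) / t * P) x hx).
  intros t ht. split; [|split].
  - apply (derivH mu nu g H (conj h0 (conj hc hd))); lra.
  - auto_derive; [lra|]. field. lra.
  - unfold P. rewrite Rmult_assoc. apply Rmult_le_compat_l; [apply Rlt_le; pos|].
    apply Rmult_le_compat; try (apply Rlt_le, exp_pos).
    + apply exp_mono. apply Rmult_le_compat_l; [lra|]. apply ln_le; [nra|]. nra.
    + apply exp_mono. specialize (hN t). apply Rabs_le_between in hN. lra.
Qed.

Lemma derivL (R : R -> R) (r : Rdefinitions.R) c nu a t : 0 < t -> is_derive R t r ->
  is_derive (fun t => c * exp (nu * ln t + a * ln (t ^ 2 + 1) + R t / t)) t
   (c * exp (nu * ln t + a * ln (t ^ 2 + 1) + R t / t) * (nu + 2 * a * (t ^ 2 / (t ^ 2 + 1)) + r - R t / t) / t).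
Proof.
  intros ht hR. auto_derive.
  - repeat split; try lra; try nra. exists r; exact hR.
  - replace (Derive (fun x => R x) t) with r by (symmetry; apply is_derive_unique; exact hR).
    replace (t * (t * 1) + 1) with (t ^ 2 + 1) by ring. unfold Rdiv. field. split; [lra|nra].
Qed.

Lemma keyineq mu nu s u : nu < mu -> 0 <= s <= 1 ->
  exp (- (mu - 1)) * (nu + 2 * ((mu - nu) / 2) * s + u) <= exp u.
Proof.
  intros h hs.
  apply Rle_trans with (exp (- (mu - 1)) * exp (mu + u - 1)).
  - apply Rmult_le_compat_l; [apply Rlt_le, exp_pos|].
    pose proof (exp_ineq1_le (mu + u - 1)). nra.
  - rewrite <- exp_plus. right. f_equal. ring.
Qed.

Lemma core1l mu nu g H N x : 1/2 < mu -> 0 < nu -> nu < 1/2 -> continuity g ->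
  (forall t, Rabs (g t) <= N) -> is_hinv mu nu g H -> 0 < x ->
  exp (- (mu - 1)) * Rpower x nu * Rpower (x ^ 2 + 1) ((mu - nu) / 2) * exp (RInt g 0 x / x) <= H x.
Proof.
  intros hmu hnu0 hnu1 hgc hN hH hx.
  set (c := exp (- (mu - 1))).
  set (a := (mu - nu) / 2).
  set (R := fun t => RInt g 0 t).
  assert (hRd : forall t, is_derive R t (g t)) by (apply derivR; exact hgc).
  apply Rle_trans with (c * exp (nu * ln x + a * ln (x ^ 2 + 1) + R x / x)).
  { right. unfold Rpower, R. rewrite !exp_plus. ring. }
  destruct hH as [h0 [hc hd]].
  assert (hN0 : 0 <= N) by (pose proof (hN 0); pose proof (Rabs_pos (g 0)); lra).
  apply (lower_lim H (fun t => c * exp (nu * ln t + a * ln (t ^ 2 + 1) + R t / t)) x nu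
     (c * exp (a * ln 2) * exp N) hx hnu0).
  { apply Rlt_le. unfold c; pos. }
  { exact hc. } { exact h0. }
  { intros e he. unfold Rpower. rewrite !exp_plus.
    assert (exp (a * ln (e ^ 2 + 1)) <= exp (a * ln 2)).
    { apply exp_mono. apply Rmult_le_compat_l; [unfold a; lra|]. apply ln_le; nra. }
    assert (exp (R e / e) <= exp N).
    { apply exp_mono. destruct (Rbound g N e hgc hN (proj1 he)) as [_ hb].
      unfold R. apply Rmult_le_reg_r with e; [lra|]. unfold Rdiv. rewrite Rmult_assoc, Rinv_l by lra. lra. }
    assert (0 < c) by (unfold c; pos).
    apply Rle_trans with (c * (exp (nu * ln e) * exp (a * ln 2) * exp N)); [|right; ring].
    apply Rmult_le_compat_l; [lra|].
    apply Rmult_le_compat; [|apply Rlt_le, exp_pos| |exact H1].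
    { apply Rlt_le, Rmult_lt_0_compat; apply exp_pos. }
    apply Rmult_le_compat_l; [apply Rlt_le, exp_pos| exact H0]. }
  apply (mono (fun t => c * exp (nu * ln t + a * ln (t ^ 2 + 1) + R t / t)) H
    (fun t => c * exp (nu * ln t + a * ln (t ^ 2 + 1) + R t / t) * (nu + 2 * a * (t ^ 2 / (t ^ 2 + 1)) + g t - R t / t) / t)
    (fun t => exp (nu * ln t) / t * exp ((mu - nu) / 2 * ln (t ^ 2 + 1)) * exp (g t)) x hx).
  intros t ht. split; [|split].
  - apply derivL; [lra|apply hRd].
  - apply (derivH mu nu g H (conj h0 (conj hc hd))); lra.
  - set (E := exp (nu * ln t + a * ln (t ^ 2 + 1) + R t / t)).
    assert (hE : E * exp (g t - R t / t) = exp (nu * ln t) * exp (a * ln (t ^ 2 + 1)) * exp (g t)).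
    { unfold E. rewrite <- !exp_plus. f_equal. ring. }
    fold a.
    replace (exp (nu * ln t) / t * exp (a * ln (t ^ 2 + 1)) * exp (g t)) with (E * exp (g t - R t / t) / t)
      by (rewrite hE; field; lra).
    unfold Rdiv. apply Rmult_le_compat_r; [apply Rlt_le, Rinv_0_lt_compat; lra|].
    replace (c * E * (nu + 2 * a * (t ^ 2 * / (t ^ 2 + 1)) + g t - R t * / t))
      with (E * (c * (nu + 2 * a * (t ^ 2 * / (t ^ 2 + 1)) + (g t - R t * / t)))) by ring.
    apply Rmult_le_compat_l; [apply Rlt_le; unfold E; pos|].
    unfold c, a. apply keyineq; [lra|].
    split.
    + apply Rmult_le_pos; [nra|]. apply Rlt_le, Rinv_0_lt_compat; nra.
    + apply Rmult_le_reg_r with (t ^ 2 + 1); [nra|]. rewrite Rmult_assoc, Rinv_l by nra. nra.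
Qed.

Lemma constineq mu nu : nu < mu -> 0 < mu ->
  exp (1 - nu - 6 * (mu - nu)) <= / mu * exp (- (2 * (mu - nu))).
Proof.
  intros h hm.
  replace (1 - nu - 6 * (mu - nu)) with ((1 - mu) + (- (2 * (mu - nu))) + (- (3 * (mu - nu)))) by ring.
  rewrite !exp_plus.
  assert (e3 : exp (- (3 * (mu - nu))) <= 1).
  { rewrite <- exp_0. apply exp_mono. lra. }
  assert (e1 : exp (1 - mu) <= / mu).
  { pose proof (exp_ineq1_le (mu - 1)).
    assert (exp (1 - mu) * exp (mu - 1) = 1) by (rewrite <- exp_plus, <- exp_0; f_equal; ring).
    pose proof (exp_pos (1 - mu)).
    apply Rmult_le_reg_l with mu; [lra|]. rewrite Rinv_r by lra. nra. }
  pose proof (exp_pos (1 - mu)). pose proof (exp_pos (- (2 * (mu - nu)))).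
  pose proof (exp_pos (- (3 * (mu - nu)))).
  apply Rle_trans with (exp (1 - mu) * exp (- (2 * (mu - nu)))).
  - rewrite <- (Rmult_1_r (exp (1 - mu) * exp (- (2 * (mu - nu))))) at 2.
    apply Rmult_le_compat_l; [nra|exact e3].
  - apply Rmult_le_compat_r; lra.
Qed.

Lemma Gexp mu nu g t :
  exp ((mu - nu) / 2 * ln (t ^ 2 + 1)) * exp (g t) = exp (Gfun mu nu g t).
Proof. unfold Gfun. rewrite <- exp_plus. f_equal. field. Qed.

Lemma eqQ mu nu g x : 0 < x ->
  powabs x (nu - 1) * Rpower (x ^ 2 + 1) ((mu - nu) / 2) * exp (g x) =
  exp (nu * ln x) / x * exp (Gfun mu nu g x).
Proof.
  intros hx. rewrite <- Gexp. unfold powabs. destruct (Req_EM_T x 0); [lra|].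
  rewrite Rabs_right by lra. unfold Rpower.
  replace ((nu - 1) * ln x) with (nu * ln x + - ln x) by ring.
  rewrite exp_plus, exp_Ropp, exp_ln by lra. field. lra.
Qed.

Lemma core2 mu nu g H x : 1/2 < mu -> 0 < nu -> nu < 1/2 ->
  inX1 mu nu g -> is_hinv mu nu g H -> 0 < x ->
  exp (1 - nu - 6 * (mu - nu)) * powabs x (nu - 1) * Rpower (x ^ 2 + 1) ((mu - nu) / 2)
    * exp (g x) <= H x / x /\
  H x / x <= / nu * powabs x (nu - 1) * Rpower (x ^ 2 + 1) ((mu - nu) / 2) * exp (g x).
Proof.
  intros hmu hnu0 hnu1 [_ [_ hG]] hH hx.
  rewrite !Rmult_assoc, <- (Rmult_assoc (powabs _ _)), eqQ by exact hx.
  set (Gx := Gfun mu nu g x).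
  pose proof (derivH mu nu g H hH) as hDH.
  destruct hH as [h0 [hc _]].
  assert (hD : forall t, 0 < t ->
     exp (nu * ln t) / t * exp ((mu - nu) / 2 * ln (t ^ 2 + 1)) * exp (g t)
     = exp (nu * ln t) / t * exp (Gfun mu nu g t)).
  { intros t ht. rewrite Rmult_assoc, Gexp. reflexivity. }
  split.
  - set (C0 := Gx - (mu - nu) * ln x - 2 * (mu - nu)).
    assert (hL : / mu * exp (mu * ln x + C0) <= H x).
    { apply (lower_lim H (fun t => / mu * exp (mu * ln t + C0)) x mu (/ mu * exp C0) hx ltac:(lra) ltac:(apply Rlt_le; pos) hc h0).
      { intros e he. unfold Rpower. rewrite exp_plus. right; ring. }
      apply (mono (fun t => / mu * exp (mu * ln t + C0)) H (fun t => exp (mu * ln t + C0) / t)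
        (fun t => exp (nu * ln t) / t * exp ((mu - nu) / 2 * ln (t ^ 2 + 1)) * exp (g t)) x hx).
      intros t ht. split; [|split].
      - auto_derive; [lra|]. field. lra.
      - apply hDH; lra.
      - rewrite hD by lra. unfold Rdiv. rewrite Rmult_assoc, (Rmult_comm (/ t)), <- Rmult_assoc, <- exp_plus.
        apply Rmult_le_compat_r; [apply Rlt_le, Rinv_0_lt_compat; lra|].
        apply exp_mono. destruct (hG x t) as [_ h2]; try lra.
        specialize (h2 (proj1 ht)). rewrite ln_div in h2 by lra. unfold C0, Gx. nra. }
    replace (mu * ln x + C0) with (nu * ln x + Gx + - (2 * (mu - nu))) in hL by (unfold C0; ring).
    rewrite !exp_plus in hL.
    pose proof (constineq mu nu ltac:(lra) ltac:(lra)).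
    pose proof (exp_pos (nu * ln x)). pose proof (exp_pos Gx).
    unfold Rdiv. 
    replace (exp (1 - nu - 6 * (mu - nu)) * (exp (nu * ln x) * / x * exp Gx))
      with ((exp (1 - nu - 6 * (mu - nu)) * (exp (nu * ln x) * exp Gx)) * / x) by ring.
    apply Rmult_le_compat_r; [apply Rlt_le, Rinv_0_lt_compat; lra|].
    eapply Rle_trans; [|exact hL].
    replace (/ mu * (exp (nu * ln x) * exp Gx * exp (- (2 * (mu - nu)))))
      with ((/ mu * exp (- (2 * (mu - nu)))) * (exp (nu * ln x) * exp Gx)) by ring.
    apply Rmult_le_compat_r; [nra|exact H0].
  - assert (hU : H x <= / nu * exp (nu * ln x) * exp Gx).
    { apply (upper_lim H (fun t => / nu * exp (nu * ln t) * exp Gx) x hx hc h0).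
      { intros e he. apply Rlt_le. pos. }
      apply (mono H (fun t => / nu * exp (nu * ln t) * exp Gx)
        (fun t => exp (nu * ln t) / t * exp ((mu - nu) / 2 * ln (t ^ 2 + 1)) * exp (g t))
        (fun t => exp (nu * ln t) / t * exp Gx) x hx).
      intros t ht. split; [|split].
      - apply hDH; lra.
      - auto_derive; [lra|]. field. lra.
      - rewrite hD by lra. apply Rmult_le_compat_l; [apply Rlt_le; pos|].
        apply exp_mono. destruct (hG x t) as [h1 _]; try lra. unfold Gx; lra. }
    unfold Rdiv.
    replace (/ nu * (exp (nu * ln x) * / x * exp Gx)) with ((/ nu * exp (nu * ln x) * exp Gx) * / x) by ring.
    apply Rmult_le_compat_r; [apply Rlt_le, Rinv_0_lt_compat; lra|exact hU].
Qed.

Lemma cont_opp_R x : continuous (fun t : R => - t) x.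
Proof. apply (continuous_opp (fun y : R => y)), continuous_id. Qed.

Lemma powabs_opp t p : powabs (- t) p = powabs t p.
Proof.
  unfold powabs. destruct (Req_EM_T (- t) 0); destruct (Req_EM_T t 0); try lra.
  rewrite Rabs_Ropp. reflexivity.
Qed.

Lemma powabs_pos t p : 0 < t -> powabs t p = Rpower t p.
Proof. intros h. unfold powabs. destruct (Req_EM_T t 0); [lra|]. rewrite Rabs_right by lra. reflexivity. Qed.

Lemma reflect mu nu g g2 H : (forall t, g2 t = g (- t)) -> is_hinv mu nu g H ->
  is_hinv mu nu g2 (fun t => - H (- t)).
Proof.
  intros hg [h0 [hc hd]]. split; [|split].
  - rewrite Ropp_0, h0. ring.
  - apply continuity_pt_filterlim.
    apply (continuous_opp (fun t => H (- t))).
    apply (continuous_comp (fun t : R => - t) H). apply cont_opp_R.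
    rewrite Ropp_0. apply continuity_pt_filterlim, hc.
  - intros t ht. apply is_derive_Reals.
    assert (hD := hd (- t) ltac:(lra)). apply is_derive_Reals in hD.
    auto_derive.
    + eexists; exact hD.
    + replace (Derive (fun x => H x) (- t)) with
        (powabs (- t) (nu - 1) * Rpower ((- t) ^ 2 + 1) ((mu - nu) / 2) * exp (g (- t)))
        by (symmetry; apply is_derive_unique; exact hD).
      rewrite powabs_opp, hg. replace ((- t) ^ 2) with (t ^ 2) by ring. ring.
Qed.

Lemma avg_pos g hc x : 0 < x -> avg0 g hc x = RInt g 0 x / x.
Proof.
  intros hx. unfold avg0. destruct (Req_EM_T x 0); [lra|]. unfold integ.
  case (Rle_dec 0 x); intros h; [|exfalso; lra]. rewrite <- RInt_Reals. reflexivity.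
Qed.

Lemma avg_neg g hc x : x < 0 -> avg0 g hc x = RInt (fun t => g (- t)) 0 (- x) / (- x).
Proof.
  intros hx. unfold avg0. destruct (Req_EM_T x 0); [lra|]. unfold integ.
  case (Rle_dec 0 x); intros h; [exfalso; lra|]. rewrite <- RInt_Reals.
  assert (e1 : - RInt g x 0 = RInt g 0 x).
  { apply (opp_RInt_swap (V := R_CompleteNormedModule)). apply exRInt, hc. }
  assert (e2 : RInt (fun y => scal (-1) (g (-1 * y + 0))) 0 (- x) = RInt g (-1 * 0 + 0) (-1 * - x + 0)).
  { apply (RInt_comp_lin (V := R_CompleteNormedModule)). apply exRInt, hc. }
  replace (-1 * 0 + 0) with 0 in e2 by ring. replace (-1 * - x + 0) with x in e2 by ring.
  assert (e3 : RInt (fun y => scal (-1) (g (-1 * y + 0))) 0 (- x) = - RInt (fun t => g (- t)) 0 (- x)).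
  { rewrite <- (RInt_opp (V := R_CompleteNormedModule)).
    - apply RInt_ext. intros y _. unfold scal; simpl; unfold mult; simpl.
      replace (-1 * y + 0) with (- y) by ring. unfold opp; simpl. ring.
    - apply exRInt. apply (continuity_comp (fun t => - t) g); [|apply hc]. intros z. apply continuity_pt_filterlim, cont_opp_R. }
  rewrite e1, <- e2, e3. field. lra.
Qed.

Lemma part1_pos mu nu g H N x : 1/2 < mu -> 0 < nu -> nu < 1/2 -> continuity g ->
  (forall t, Rabs (g t) <= N) -> is_hinv mu nu g H -> 0 < x ->
  H x <= / nu * Rpower x nu * Rpower (x ^ 2 + 1) ((mu - nu) / 2) * exp N /\
  exp (- (mu - 1)) * Rpower x nu * Rpower (x ^ 2 + 1) ((mu - nu) / 2) * exp (RInt g 0 x / x) <= H x /\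
  exp (- (mu - 1)) * Rpower x nu * Rpower (x ^ 2 + 1) ((mu - nu) / 2) * exp (- N)
   <= exp (- (mu - 1)) * Rpower x nu * Rpower (x ^ 2 + 1) ((mu - nu) / 2) * exp (RInt g 0 x / x) /\
  0 < H x.
Proof.
  intros hmu hnu0 hnu1 hgc hN hH hx.
  pose proof (core1u mu nu g H N x hmu hnu0 hnu1 hN hH hx).
  pose proof (core1l mu nu g H N x hmu hnu0 hnu1 hgc hN hH hx).
  assert (hp : 0 < exp (- (mu - 1)) * Rpower x nu * Rpower (x ^ 2 + 1) ((mu - nu) / 2))
    by (unfold Rpower; pos).
  split; [exact H0|]. split; [exact H1|]. split.
  - apply Rmult_le_compat_l; [lra|]. apply exp_mono.
    destruct (Rbound g N x hgc hN hx) as [hb _].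
    apply Rmult_le_reg_r with x; [lra|]. unfold Rdiv. rewrite Rmult_assoc, Rinv_l by lra. lra.
  - eapply Rlt_le_trans; [|exact H1]. pose proof (exp_pos (RInt g 0 x / x)).
    apply Rmult_lt_0_compat; assumption.
Qed.

Theorem lemma5p2 (mu nu : R) (Hmu : 1 / 2 < mu) (Hnu0 : 0 < nu) (Hnu1 : nu < 1 / 2) :
  (forall (g : R -> R) (hX : inX g) (H : R -> R) (N : R),
     is_hinv mu nu g H -> is_supnorm g N ->
     forall x : R,
       Rabs (H x) <= / nu * powabs x nu * Rpower (x ^ 2 + 1) ((mu - nu) / 2) * exp N /\
       exp (- (mu - 1)) * powabs x nu * Rpower (x ^ 2 + 1) ((mu - nu) / 2)
         * exp (avg0 g (inX_cont g hX) x) <= Rabs (H x) /\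
       exp (- (mu - 1)) * powabs x nu * Rpower (x ^ 2 + 1) ((mu - nu) / 2) * exp (- N)
         <= exp (- (mu - 1)) * powabs x nu * Rpower (x ^ 2 + 1) ((mu - nu) / 2)
              * exp (avg0 g (inX_cont g hX) x)) /\
  (forall (g : R -> R) (H : R -> R),
     inX1 mu nu g -> is_hinv mu nu g H ->
     forall x : R, x <> 0 ->
       exp (1 - nu - 6 * (mu - nu)) * powabs x (nu - 1) * Rpower (x ^ 2 + 1) ((mu - nu) / 2)
         * exp (g x) <= H x / x /\
       H x / x <= / nu * powabs x (nu - 1) * Rpower (x ^ 2 + 1) ((mu - nu) / 2) * exp (g x)).
Proof.
  split.
  - intros g hX H N hH hN x.
    assert (hb : forall t, Rabs (g t) <= N).
    { intros t. destruct hN as [hub _]. apply hub. exists t; reflexivity. }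
    set (hgc := inX_cont g hX).
    destruct (total_order_T x 0) as [[hneg|hz]|hpos].
    + set (g2 := fun t => g (- t)).
      assert (hg2c : continuity g2).
      { apply (continuity_comp (fun t => - t) g); [|exact hgc]. intros z. apply continuity_pt_filterlim, cont_opp_R. }
      assert (hb2 : forall t, Rabs (g2 t) <= N) by (intros t; apply hb).
      assert (hH2 := reflect mu nu g g2 H (fun t => eq_refl) hH).
      destruct (part1_pos mu nu g2 (fun t => - H (- t)) N (- x) Hmu Hnu0 Hnu1 hg2c hb2 hH2 ltac:(lra))
        as [a1 [a2 [a3 a4]]].
      rewrite Ropp_involutive in a1, a2, a4.
      replace ((- x) ^ 2) with (x ^ 2) in a1, a2, a3 by ring.
      rewrite avg_neg by exact hneg.
      replace (powabs x nu) with (Rpower (- x) nu)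
        by (rewrite <- (powabs_opp x), powabs_pos by lra; reflexivity).
      rewrite Rabs_left by lra. fold g2. auto.
    + subst x. unfold powabs. destruct (Req_EM_T 0 0); [|lra].
      destruct hH as [h0 _]. rewrite h0, Rabs_R0. split; [|split]; right; ring.
    + rewrite avg_pos by exact hpos. rewrite powabs_pos by exact hpos.
      destruct (part1_pos mu nu g H N x Hmu Hnu0 Hnu1 hgc hb hH hpos) as [a1 [a2 [a3 a4]]].
      rewrite Rabs_right by lra. auto.
  - intros g H hX1 hH x hx.
    destruct (Rle_or_lt x 0) as [hneg|hpos].
    + assert (hev : forall t, g (- t) = g t).
      { intros t. destruct hX1 as [_ [he _]]. specialize (he t). unfold Gfun in he.
        replace ((- t) ^ 2) with (t ^ 2) in he by ring. lra. }
      assert (hH2 := reflect mu nu g g H (fun t => eq_sym (hev t)) hH).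
      destruct (core2 mu nu g (fun t => - H (- t)) (- x) Hmu Hnu0 Hnu1 hX1 hH2 ltac:(lra)) as [a1 a2].
      rewrite Ropp_involutive, powabs_opp, hev in a1, a2.
      replace ((- x) ^ 2) with (x ^ 2) in a1, a2 by ring.
      replace (- H x / - x) with (H x / x) in a1, a2 by (field; exact hx).
      auto.
    + exact (core2 mu nu g H x Hmu Hnu0 Hnu1 hX1 hH hpos).
Qed.
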